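(* Assume the setting described in the context, assume $L>1$, let $\xi=(\xi_1,\dots,\xi_{\ell_L})\in\mathbb R^{\ell_L}$, for $i,j\in\mathbb N_0$, $k\in\mathbb N$ let $\alpha_{i,j,k}=i\ell_{k-1}+j+\sum_{h=1}^{k-1}\ell_h(\ell_{h-1}+1)$, and let $\theta=(\theta_1,\dots,\theta_{\mathfrak d})$, $\vartheta=(\vartheta_1,\dots,\vartheta_{\mathfrak d})\in\mathbb R^{\mathfrak d}$ satisfy for all $i\in\{1,\dots,\ell_L\}$ and all $j\in\{1,\dots,\mathfrak d\}\setminus\big(\bigcup_{k=1}^{\ell_L}\{\alpha_{\ell_{L-1},1,L-1},\alpha_{0,1,L},\alpha_{\ell_L,k,L}\}\big)$ that $\theta_{\alpha_{\ell_{L-1},1,L-1}}=\vartheta_{\alpha_{0,1,L}}=1$, $\theta_{\alpha_{\ell_L,i,L}}=\vartheta_{\alpha_{\ell_L,i,L}}=\xi_i$, and $\theta_{\alpha_{0,1,L}}=\vartheta_{\alpha_{\ell_{L-1},1,L-1}}=\theta_j=\vartheta_j=0$. Then $\mathcal L_\infty(\theta)=\mathcal L_\infty(\vartheta)$ and $$\mathcal L_\infty\Big(\frac{\theta+\vartheta}2\Big)=\Big[\frac{\mathcal L_\infty(\theta)+\mathcal L_\infty(\vartheta)}2\Big]+\frac{\mathfrak m}{16}+\frac12\Big[\xi_1\mathfrak m-\int_{[a,b]^{\ell_0}}f_1(x)\,\mu(dx)\Big].$$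
   Context: Setting. Let $L,\mathfrak d\in\mathbb N=\{1,2,\dots\}$, $(\ell_k)_{k\in\mathbb N_0}\subseteq\mathbb N$, $a\in\mathbb R$, $b\in(a,\infty)$ with $\mathfrak d=\sum_{k=1}^L\ell_k(\ell_{k-1}+1)$; let $\mathbf d_k=\sum_{h=1}^k\ell_h(\ell_{h-1}+1)$ for $k\in\mathbb N_0$. For $\theta=(\theta_1,\dots,\theta_{\mathfrak d})\in\mathbb R^{\mathfrak d}$, $k\in\{1,\dots,L\}$, $i\in\{1,\dots,\ell_k\}$, $j\in\{1,\dots,\ell_{k-1}\}$ let $\mathfrak w^{k,\theta}_{i,j}=\theta_{(i-1)\ell_{k-1}+j+\mathbf d_{k-1}}$ and $\mathfrak b^{k,\theta}_i=\theta_{\ell_k\ell_{k-1}+i+\mathbf d_{k-1}}$, let $\mathfrak w^{k,\theta}=(\mathfrak w^{k,\theta}_{i,j})_{i,j}\in\mathbb R^{\ell_k\times\ell_{k-1}}$, $\mathfrak b^{k,\theta}=(\mathfrak b^{k,\theta}_1,\dots,\mathfrak b^{k,\theta}_{\ell_k})\in\mathbb R^{\ell_k}$, and $\mathcal A^\theta_k(x)=\mathfrak b^{k,\theta}+\mathfrak w^{k,\theta}x$. Let $\mathfrak M_\infty(x_1,\dots,x_n)=(\max\{x_1,0\},\dots,\max\{x_n,0\})$ and $\|\cdot\|$ the Euclidean norm. Define $\mathcal N^{k,\theta}_\infty\colon\mathbb R^{\ell_0}\to\mathbb R^{\ell_k}$, $k\in\{1,\dots,L\}$, by $\mathcal N^{1,\theta}_\infty=\mathcal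 A^\theta_1$ and $\mathcal N^{k+1,\theta}_\infty(x)=\mathcal A^\theta_{k+1}(\mathfrak M_\infty(\mathcal N^{k,\theta}_\infty(x)))$. Let $\mu$ be a measure on the Borel $\sigma$-algebra of $[a,b]^{\ell_0}$ with $\mathfrak m=\mu([a,b]^{\ell_0})\in\mathbb R$, let $f=(f_1,\dots,f_{\ell_L})\colon[a,b]^{\ell_0}\to\mathbb R^{\ell_L}$ be measurable, and let $\mathcal L_\infty\colon\mathbb R^{\mathfrak d}\to\mathbb R$, $\mathcal L_\infty(\theta)=\int_{[a,b]^{\ell_0}}\|\mathcal N^{L,\theta}_\infty(x)-f(x)\|^2\,\mu(dx)$ (these integrals are real numbers as part of the setting). *)

(* Defs.v *)
From HB Require Import structures.
From mathcomp Require Import all_boot all_order all_algebra.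
From mathcomp Require Import all_classical all_reals all_analysis.
Unset Printing Implicit Defensive.
Import Order.TTheory GRing.Theory Num.Theory.
Local Open Scope ring_scope.

Section ANN.
Variable R : realType.
Variable l : nat -> nat.   (* layer widths l_0, l_1, ... *)

Definition dsum (k : nat) : nat := (\sum_(1 <= h < k.+1) l h * (l h.-1 + 1))%N.

Definition alpha (i j k : nat) : nat := (i * l k.-1 + j + dsum k.-1)%N.

(* 1-based coordinate theta_k of theta in R^n (0 outside {1,...,n}) *)
Definition pcoord {n : nat} (th : 'rV[R]_n) (k : nat) : R :=
  if k is k'.+1 then oapp (fun i : 'I_n => th 0 i) 0 (insub k') else 0.

Variable dd : nat.

(* weight matrix w^{k,theta} and bias vector b^{k,theta}; i0, j0 are 0-based,
   so the paper's i = i0+1, j = j0+1 *)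
Definition wmat (th : 'rV[R]_dd) (k : nat) : 'M[R]_(l k, l k.-1) :=
  \matrix_(i0 < l k, j0 < l k.-1) pcoord th ((i0.+1 - 1) * l k.-1 + j0.+1 + dsum k.-1)%N.
Definition bvec (th : 'rV[R]_dd) (k : nat) : 'cV[R]_(l k) :=
  \col_(i0 < l k) pcoord th (l k * l k.-1 + i0.+1 + dsum k.-1)%N.

Definition affA (th : 'rV[R]_dd) (k : nat) (x : 'cV[R]_(l k.-1)) : 'cV[R]_(l k) :=
  bvec th k + wmat th k *m x.

Definition relu {n : nat} (x : 'cV[R]_n) : 'cV[R]_n := map_mx (fun v => Num.max v 0) x.

(* netk th k = N^{k+1,theta}_infty *)
Fixpoint netk (th : 'rV[R]_dd) (k : nat) : 'cV[R]_(l 0) -> 'cV[R]_(l k.+1) :=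
  match k with
  | 0 => affA th 1
  | k'.+1 => fun x => affA th k'.+2 (relu (netk th k' x))
  end.

(* N^{L,theta}_infty for L >= 1 (value for L = 0 is an unused convention) *)
Definition net (th : 'rV[R]_dd) (L : nat) : 'cV[R]_(l 0) -> 'cV[R]_(l L) :=
  match L return 'cV[R]_(l 0) -> 'cV[R]_(l L) with
  | 0 => fun x => x
  | L'.+1 => netk th L'
  end.

Definition sqnorm {n : nat} (v : 'cV[R]_n) : R := \sum_(i < n) v i 0 ^+ 2.

Definition tcol {n : nat} (x : n.-tuple R) : 'cV[R]_n := \col_(i < n) tnth x i.

Definition cube (n : nat) (a b : R) : set (n.-tuple R) :=
  [set x | forall i : 'I_n, a <= tnth x i <= b].

Definition loss_integrand (L : nat) (f : (l 0).-tuple R -> (l L).-tuple R)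
  (th : 'rV[R]_dd) (x : (l 0).-tuple R) : R :=
  sqnorm (net th L (tcol x) - tcol (f x)).

Definition loss (L : nat) (a b : R)
  (mu : {measure set ((l 0).-tuple R) -> \bar R})
  (f : (l 0).-tuple R -> (l L).-tuple R) (th : 'rV[R]_dd) : R :=
  Rintegral mu (cube (l 0) a b) (loss_integrand L f th).

End ANN.

(* Main.v *)
Require Import Defs.
From HB Require Import structures.
From mathcomp Require Import all_boot all_order all_algebra.
From mathcomp Require Import all_classical all_reals all_analysis.
From mathcomp Require Import zify ring lra.
Import Order.TTheory GRing.Theory Num.Theory.
Local Open Scope ring_scope.
Lemma pcoord_mid (R : realType) n (t u : 'rV[R]_n) j :
  pcoord R (2^-1 *: (t + u)) j = 2^-1 * (pcoord R t j + pcoord R u j).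
Proof.
case: j => [|j] /=; first by rewrite addr0 mulr0.
by case: insubP => [i _ _|_] /=; rewrite ?mxE ?addr0 ?mulr0.
Qed.

Lemma dsumS (l : nat -> nat) k : dsum l k.+1 = (dsum l k + l k.+1 * (l k + 1))%N.
Proof. by rewrite /dsum big_nat_recr. Qed.

Section Net.
Variables (R : realType) (l : nat -> nat) (hl : forall k, (0 < l k)%N) (n : nat).
Variables (xi : 'cV[R]_(l n.+2)) (th : 'rV[R]_(dsum l n.+2)) (c c' : R).
Hypotheses (H1 : pcoord R th (alpha l (l n.+1) 1 n.+1) = c)
  (H2 : pcoord R th (alpha l 0 1 n.+2) = c')
  (Hb : forall i : 'I_(l n.+2), pcoord R th (alpha l (l n.+2) i.+1 n.+2) = xi i 0)
  (H0 : forall j, (1 <= j <= dsum l n.+2)%N -> j <> alpha l (l n.+1) 1 n.+1 ->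
     j <> alpha l 0 1 n.+2 ->
     (forall k, (1 <= k <= l n.+2)%N -> j <> alpha l (l n.+2) k n.+2) ->
     pcoord R th j = 0).

Lemma wmat1 : wmat R l (dsum l n.+2) th n.+1 = 0.
Proof.
apply/matrixP => i j; rewrite !mxE /=.
have Hi := ltn_ord i; have Hj : (@nat_of_ord (l n) j < l n)%N := ltn_ord j.
have : (i.+1 * l n <= l n.+1 * l n)%N by rewrite leq_mul2r Hi orbT.
rewrite mulSn => Hm.
have := hl n.+2; have := hl n.+1; have := hl n => h0 h1 h2.
apply: H0; rewrite /alpha /= ?dsumS ?subn1 /= ?mulnDr ?muln1; try move=> k hk. all: lia.
Qed.


Lemma bvec1 : bvec R l (dsum l n.+2) th n.+1 = c *: delta_mx (Ordinal (hl n.+1)) 0.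
Proof.
apply/matrixP => i z; rewrite !mxE /= (ord1 z) eqxx andbT.
have [->|ne] := eqVneq i (Ordinal (hl n.+1)); first by rewrite mulr1; exact: H1.
rewrite mulr0; have {ne} ne : (@nat_of_ord (l n.+1) i != 0)%N by move: ne; rewrite -val_eqE.
have Hi : (@nat_of_ord (l n.+1) i < l n.+1)%N := ltn_ord i.
have := hl n.+2; have := hl n.+1; have := hl n => h0 h1 h2.
apply: H0; rewrite /alpha /= ?dsumS ?mulnDr ?muln1; try move=> k hk; lia.
Qed.

Lemma bvec2 : bvec R l (dsum l n.+2) th n.+2 = xi.
Proof. by apply/matrixP => i z; rewrite !mxE (ord1 z) -Hb. Qed.

Lemma wmat2 : wmat R l (dsum l n.+2) th n.+2 =
  c' *: delta_mx (Ordinal (hl n.+2)) (Ordinal (hl n.+1)).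
Proof.
apply/matrixP => i j; rewrite !mxE /=.
have [->|ne] := eqVneq i (Ordinal (hl n.+2)).
  have [->|nej] := eqVneq j (Ordinal (hl n.+1)).
    rewrite /= mulr1 ?eqxx ?mulr1; exact: H2.
  rewrite andbF mulr0.
  have {nej} nej : (@nat_of_ord (l n.+1) j != 0)%N by move: nej; rewrite -val_eqE.
  have Hj : (@nat_of_ord (l n.+1) j < l n.+1)%N := ltn_ord j.
  have := hl n.+2; have := hl n.+1; have := hl n => h0 h1 h2.
  apply: H0; rewrite /alpha /= ?dsumS ?subn1 /= ?mulnDr ?muln1; try move=> k hk; nia.
rewrite andFb mulr0.
have {ne} ne : (@nat_of_ord (l n.+2) i != 0)%N by move: ne; rewrite -val_eqE.
have Hi : (@nat_of_ord (l n.+2) i < l n.+2)%N := ltn_ord i.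
have Hj : (@nat_of_ord (l n.+1) j < l n.+1)%N := ltn_ord j.
have : (i.+1 * l n.+1 <= l n.+2 * l n.+1)%N by rewrite leq_mul2r Hi orbT.
rewrite mulSn => Hm.
have := hl n.+2; have := hl n.+1; have := hl n => h0 h1 h2.
apply: H0; rewrite /alpha /= ?dsumS ?subn1 /= ?mulnDr ?muln1; try move=> k hk; nia.
Qed.

Lemma netk_aff k (t : 'rV[R]_(dsum l n.+2)) x :
  exists y, netk R l (dsum l n.+2) t k x = affA R l (dsum l n.+2) t k.+1 y.
Proof. by case: k => [|k]; eexists. Qed.

Lemma net_eq x : net R l (dsum l n.+2) th n.+2 x =
  xi + (c' * Num.max c 0) *: delta_mx (Ordinal (hl n.+2)) 0.
Proof.
rewrite /=; have [y ->] := netk_aff n th x.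
rewrite /affA wmat1 mul0mx addr0 bvec1 bvec2 wmat2.
have -> : relu R (c *: delta_mx (Ordinal (hl n.+1)) (0 : 'I_1)) =
          Num.max c 0 *: delta_mx (Ordinal (hl n.+1)) (0 : 'I_1).
  apply/matrixP => i j; rewrite !mxE.
  by case: (_ && _); rewrite ?mulr1 ?mulr0 //= maxxx.
by rewrite -scalemxAl -scalemxAr mul_delta_mx scalerA.
Qed.

End Net.

Section Aux.
Local Open Scope classical_set_scope.
Lemma cube_meas (R : realType) n (a b : R) : measurable (cube R n a b).
Proof.
have -> : cube R n a b = \bigcap_(i in [set: 'I_n]) ((fun x : n.-tuple R => tnth x i) @^-1` `[a, b]).
  apply/seteqP; split => x /=.
    by move=> H i _; rewrite /= in_itv /=; apply: H.
  by move=> H i; have := H i I; rewrite /= in_itv.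
apply: fin_bigcap_measurable; first exact: finite_finset.
move=> i _; rewrite -[X in measurable X]setTI.
by apply: measurable_tnth => //; apply: measurable_itv.
Qed.

Lemma cst_int d (T : measurableType d) (R : realType) (mu : {measure set T -> \bar R}) (D : set T)
  (mD : measurable D) (fin : (mu D < +oo)%E) (k : R) : mu.-integrable D (EFin \o cst k).
Proof.
apply/integrableP; split.
  by apply/measurable_realfun.measurable_EFinP; exact: measurable_cst.
rewrite (_ : (fun x => `|(EFin \o cst k) x|) = cst `|k|%:E)%E; last by apply: funext.
rewrite integral_cst //= lte_mul_pinfty //.
Qed.

End Aux.

Lemma sqnormD (R : realType) k (v : 'cV[R]_k) (i0 : 'I_k) (s : R) :
  sqnorm R (v + s *: delta_mx i0 0) = sqnorm R v + 2 * s * v i0 0 + s ^+ 2.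
Proof.
rewrite /sqnorm (bigD1 i0) //= [in RHS](bigD1 i0) //= !mxE eqxx /=.
rewrite (eq_bigr (fun i => v i 0 ^+ 2)); last first.
  by move=> i /negbTE hi; rewrite !mxE hi /= mulr0 addr0.
rewrite mulr1; ring.
Qed.

Theorem proposition2p17 (R : realType) (l : nat -> nat)
  (hl : forall k, (0 < l k)%N) (L : nat) (a b : R) (hab : a < b)
  (mu : {measure set ((l 0%N).-tuple R) -> \bar R})
  (hmu : (mu (cube R (l 0%N) a b) < +oo)%E)
  (f : (l 0%N).-tuple R -> (l L).-tuple R)
  (hf : measurable_fun (cube R (l 0%N) a b) f)
  (hint : forall th : 'rV[R]_(dsum l L),
     mu.-integrable (cube R (l 0%N) a b)
       (fun x => (loss_integrand R l (dsum l L) L f th x)%:E))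
  (hL : (1 < L)%N) (xi : 'cV[R]_(l L)) (th vth : 'rV[R]_(dsum l L))
  (Hth1 : pcoord R th (alpha l (l L.-1) 1 L.-1) = 1)
  (Hvth1 : pcoord R vth (alpha l 0 1 L) = 1)
  (Hxi : forall i : 'I_(l L),
     pcoord R th (alpha l (l L) i.+1 L) = xi i 0 /\
     pcoord R vth (alpha l (l L) i.+1 L) = xi i 0)
  (Hth0 : pcoord R th (alpha l 0 1 L) = 0)
  (Hvth0 : pcoord R vth (alpha l (l L.-1) 1 L.-1) = 0)
  (Hzero : forall j : nat, (1 <= j <= dsum l L)%N ->
     j <> alpha l (l L.-1) 1 L.-1 -> j <> alpha l 0 1 L ->
     (forall k : nat, (1 <= k <= l L)%N -> j <> alpha l (l L) k L) ->
     pcoord R th j = 0 /\ pcoord R vth j = 0) :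
  let m := fine (mu (cube R (l 0%N) a b)) in
  let Loss := loss R l (dsum l L) L a b mu f in
  Loss th = Loss vth /\
  Loss (2^-1 *: (th + vth)) =
    (Loss th + Loss vth) / 2 + m / 16
    + 2^-1 * (xi (Ordinal (hl L)) 0 * m
              - Rintegral mu (cube R (l 0%N) a b) (fun x => tnth (f x) (Ordinal (hl L)))).
Proof.
destruct L as [|[|n]]; [by [] | by [] | ].
move=> m Loss.
set D := cube R (l 0%N) a b.
have mD : measurable D by exact: cube_meas.
set i0 := Ordinal (hl n.+2).
pose g0 := fun x => sqnorm R (xi - tcol R (f x)).
have Eth : loss_integrand R l _ n.+2 f th = g0.
  apply: funext => x; rewrite /loss_integrand.
  rewrite (net_eq R l hl n xi th 1 0 Hth1 Hth0 (fun i => (Hxi i).1)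
     (fun j a b c d => (Hzero j a b c d).1)).
  by rewrite mul0r scale0r addr0.
have Evth : loss_integrand R l _ n.+2 f vth = g0.
  apply: funext => x; rewrite /loss_integrand.
  rewrite (net_eq R l hl n xi vth 0 1 Hvth0 Hvth1 (fun i => (Hxi i).2)
     (fun j a b c d => (Hzero j a b c d).2)).
  by rewrite maxxx mulr0 scale0r addr0.
pose h := fun x => 2^-1 * (xi i0 0 - tnth (f x) i0) + 16^-1 : R.
set mid := 2^-1 *: (th + vth).
have Em : loss_integrand R l _ n.+2 f mid = fun x => g0 x + h x.
  apply: funext => x; rewrite /loss_integrand.
  have H1 : pcoord R mid (alpha l (l n.+1) 1 n.+1) = 2^-1.
    by rewrite pcoord_mid Hth1 Hvth0 addr0 mulr1.
  have H2 : pcoord R mid (alpha l 0 1 n.+2) = 2^-1.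
    by rewrite pcoord_mid Hth0 Hvth1 add0r mulr1.
  have Hb : forall i : 'I_(l n.+2), pcoord R mid (alpha l (l n.+2) i.+1 n.+2) = xi i 0.
    by move=> i; rewrite pcoord_mid (Hxi i).1 (Hxi i).2; by field.
  have H0 : forall j, (1 <= j <= dsum l n.+2)%N -> j <> alpha l (l n.+1) 1 n.+1 ->
     j <> alpha l 0 1 n.+2 ->
     (forall k, (1 <= k <= l n.+2)%N -> j <> alpha l (l n.+2) k n.+2) ->
     pcoord R mid j = 0.
    move=> j a1 a2 a3 a4; rewrite pcoord_mid; have [-> ->] := Hzero j a1 a2 a3 a4.
    by rewrite addr0 mulr0.
  rewrite (net_eq R l hl n xi mid _ _ H1 H2 Hb H0).
  have -> : Num.max (2^-1 : R) 0 = 2^-1 by apply/max_idPl; rewrite invr_ge0 ler0n.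
  rewrite addrAC sqnormD /g0 /h !mxE; rewrite -addrA; congr (_ + _); by field.
have ig0 : mu.-integrable D (EFin \o g0) by have := hint th; rewrite Eth.
have igm : mu.-integrable D (fun x => (g0 x + h x)%:E) by have := hint mid; rewrite Em.
have ih : mu.-integrable D (EFin \o h).
  apply: (eq_integrable mD _ _ _ (integrableB mD igm ig0)) => x _.
  by rewrite /= -EFinB addrAC subrr add0r.
set k := 2^-1 * xi i0 0 + 16^-1 : R.
pose f0 := fun x => tnth (f x) i0.
have icst : mu.-integrable D (EFin \o cst k) by exact: cst_int.
have if0 : mu.-integrable D (EFin \o f0).
  apply: (eq_integrable mD _ _ _ (integrableZl mD 2 (integrableB mD icst ih))) => x _.
  rewrite /= -EFinB -EFinM; congr EFin; rewrite /h /k /f0; by field.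
have if0' : mu.-integrable D (EFin \o (fun x => 2^-1 * f0 x)).
  apply: (eq_integrable mD _ _ _ (integrableZl mD 2^-1 if0)) => x _.
  by rewrite /= -EFinM.
split; first by rewrite /Loss /loss Eth Evth.
rewrite /Loss /loss Eth Em RintegralD //.
rewrite (_ : h = fun x => k - 2^-1 * f0 x); last first.
  by apply: funext => x; rewrite /h /k /f0; by field.
rewrite RintegralB // Rintegral_cst // RintegralZl // /m -/D.
rewrite Evth /f0 /k.
move: (\int[mu]_(x in D) g0 x) (\int[mu]_(x in D) tnth (f x) i0) (fine (mu D)) (xi i0 0) => A B C X.
by field.
Qed.
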